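(* For positive integers $n$ and $r$, let $s=(2r,3r,\ldots,nr)$ and $\mu=(r,2r,\ldots,nr)$. Then \[ d_{n-1}^s(z)+d_n^\mu(z)=\sum_{\sigma\in\mathbb{Z}_r\wr\mathfrak{S}_n:\ S_\sigma=\emptyset}z^{\mathrm{des}(\sigma)}. \]
   Context: For a sequence $t=(t_1,\ldots,t_m)$ of positive integers, $P_m^t=\{x\in\mathbb{R}^m:0\le x_1/t_1\le\cdots\le x_m/t_m\le1\}$ and $d_m^t(z)=\ell^\ast(P_m^t;z)$, where for a lattice $d$-simplex $\Delta=\mathrm{conv}(v^{(0)},\ldots,v^{(d)})\subset\mathbb{R}^m$, $\ell^\ast(\Delta;z)=\sum_{x\in\Pi^\circ_\Delta\cap\mathbb{Z}^{m+1}}z^{x_{m+1}}$, $\Pi^\circ_\Delta=\{\sum_i\lambda_i(v^{(i)},1):0<\lambda_i<1\}$. $\mathbb{Z}_r\wr\mathfrak{S}_n$ is the set of $r$-colored permutations $\sigma=\pi_1^{c_1}\cdots\pi_n^{c_n}$ ($\pi\in\mathfrak{S}_n$, $c_i\in\{0,\ldots,r-1\}$). With $\pi_{n+1}=n+1$, $c_{n+1}=0$, $i\in[n]$ is a descent if $c_i>c_{i+1}$, or $c_i=c_{i+1}$ and $\pi_i>\pi_{i+1}$; $\mathrm{des}(\sigma)$ counts descents. With conventions $\pi_0=0$, $c_0=0$, a number $i\in[n]$ is bad for $\sigma$ if, for $j$ with $\pi_j=i$: (1) $\pi_j<\pi_k$ for all $k>j$; (2) $\pi_{j-1}<\pi_k$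 for all $k>j-1$; (3) $c_j=c_{j-1}$. $S_\sigma$ is the set of bad numbers of $\sigma$. *)

(* Defs.v *)
From HB Require Import structures.
From mathcomp Require Import all_boot all_order all_algebra all_fingroup.
From mathcomp Require Import boolp.
Set Implicit Arguments. Unset Strict Implicit. Unset Printing Implicit Defensive.
Import Order.TTheory GRing.Theory Num.Theory.
Local Open Scope ring_scope.

(* lift a point v of Z^m to (v,1) in Z^(m+1); the last coordinate is ord_max *)
Definition lift_pt (m : nat) (v : 'I_m -> int) : 'I_m.+1 -> int :=
  fun j => match unlift ord_max j with Some j' => v j' | None => 1 end.

(* x lies in the open parallelepiped  { sum_i lam_i (v^(i),1) : 0 < lam_i < 1 }.
   (For affinely independent lattice vertices the coefficients of a lattice point
   are necessarily rational, so quantifying over rational lam is the same.) *)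
Definition in_open_pp (d m : nat) (v : 'I_d.+1 -> 'I_m -> int)
    (x : 'I_m.+1 -> int) : Prop :=
  exists lam : 'I_d.+1 -> rat,
    (forall i, 0 < lam i < 1) /\
    forall j, (x j)%:~R = \sum_(i < d.+1) lam i * (lift_pt (v i) j)%:~R.

(* Bound on the absolute value of every coordinate of a point of the open
   parallelepiped: |x_j| < sum_i |(v^(i),1)_j| <= B. *)
Definition pp_bound (d m : nat) (v : 'I_d.+1 -> 'I_m -> int) : nat :=
  (\sum_(i < d.+1) \sum_(j < m.+1) `|lift_pt (v i) j|%N)%N.

(* l^*(Delta; z) = sum over lattice points x of the open parallelepiped of
   z^(x_(m+1)); lattice points are enumerated in the box [-B, B]^(m+1),
   which contains all of them. *)
Definition lstar (d m : nat) (v : 'I_d.+1 -> 'I_m -> int) : {poly int} :=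
  let B := pp_bound v in
  \sum_(y : {ffun 'I_m.+1 -> 'I_(B.*2.+1)})
     let x := fun j => (y j)%:Z - B%:Z in
     if `[< in_open_pp v x >] then 'X^(absz (x ord_max)) else 0.

(* t is given 0-based: t_1,...,t_m are t 0, ..., t (m-1).
   P_m^t = {0 <= x_1/t_1 <= ... <= x_m/t_m <= 1} is the simplex whose vertices
   are v^(k), k = 0..m, with v^(k)_j = 0 for j <= k and t_j for j > k
   (1-based j); in 0-based coordinates: t j if k <= j, else 0. *)
Definition vertP (m : nat) (t : nat -> nat) (k : 'I_m.+1) (j : 'I_m) : int :=
  if (k <= j)%N then (t j)%:Z else 0.

Definition dpoly (m : nat) (t : nat -> nat) : {poly int} := lstar (@vertP m t).

(* sigma = (pi, c) with pi : 'S_n (values 0..n-1 standing for 1..n) and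
   c : 'I_n -> 'I_r.  1-based accessors with the paper's conventions:
   pi_0 = 0, c_0 = 0, pi_(n+1) = n+1, c_(n+1) = 0. *)

Definition piv (n : nat) (p : {perm 'I_n}) (i : nat) : nat :=
  if i == 0%N then 0%N else
  match @insub nat (fun k => (k < n)%N) 'I_n i.-1 with
  | Some k => (p k).+1 | None => n.+1 end.

Definition colv (n r : nat) (c : {ffun 'I_n -> 'I_r}) (i : nat) : nat :=
  if i == 0%N then 0%N else
  match @insub nat (fun k => (k < n)%N) 'I_n i.-1 with
  | Some k => nat_of_ord (c k) | None => 0%N end.

Definition is_descent (n r : nat) (p : {perm 'I_n}) (c : {ffun 'I_n -> 'I_r})
    (i : nat) : bool :=
  (colv c i > colv c i.+1)%N ||
  ((colv c i == colv c i.+1) && (piv p i > piv p i.+1)%N).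

Definition des (n r : nat) (p : {perm 'I_n}) (c : {ffun 'I_n -> 'I_r}) : nat :=
  count (is_descent p c) (iota 1 n).

(* i in [n] is bad: for the position j with pi_j = i,
   (1) pi_j < pi_k for all k > j, (2) pi_(j-1) < pi_k for all k > j-1,
   (3) c_j = c_(j-1).  (k ranges over positions j+1..n+1, resp. j..n+1.) *)
Definition is_bad (n r : nat) (p : {perm 'I_n}) (c : {ffun 'I_n -> 'I_r})
    (i : nat) : bool :=
  has (fun j =>
         [&& piv p j == i,
             all (fun k => (piv p j < piv p k)%N) (iota j.+1 (n.+1 - j)),
             all (fun k => (piv p j.-1 < piv p k)%N) (iota j (n.+2 - j)) &
             colv c j == colv c j.-1])
      (iota 1 n).

Definition no_bad (n r : nat) (p : {perm 'I_n}) (c : {ffun 'I_n -> 'I_r}) : bool :=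
  ~~ has (is_bad p c) (iota 1 n).

(* Main.v *)
Require Import Defs.
From HB Require Import structures.
From mathcomp Require Import all_boot all_order all_algebra all_fingroup.
From mathcomp Require Import zify ring lra.
From mathcomp Require Import boolp.
Import Order.TTheory GRing.Theory Num.Theory.
Set Implicit Arguments. Unset Strict Implicit.

Local Open Scope ring_scope.
Section Char.
Variables (m : nat) (t : nat -> nat).
Hypothesis ht : forall j, (0 < t j)%N.

Definition Lm (x : 'I_m.+1 -> int) (k : nat) : rat :=
  if k == 0%N then 0 else if (k <= m)%N then (x (inord k.-1))%:~R / (t k.-1)%:R
  else (x ord_max)%:~R.

Lemma lift_pt_lift (v : 'I_m -> int) (k : 'I_m) : lift_pt v (lift ord_max k) = v k.
Proof. by rewrite /lift_pt liftK. Qed.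

Lemma lift_pt_max (v : 'I_m -> int) : lift_pt v ord_max = 1.
Proof. by rewrite /lift_pt unlift_none. Qed.

Lemma sum_lt (F : 'I_m.+1 -> rat) k : (k <= m.+1)%N ->
  \sum_(i < m.+1 | (i < k)%N) F i = \sum_(0 <= i < k) F (inord i).
Proof.
move=> hk; rewrite big_mkord (big_ord_widen _ (fun i => F (inord i)) hk).
by apply: eq_bigr => i _; rewrite inord_val.
Qed.

Lemma tele_ord (f : nat -> rat) k : (k <= m.+1)%N ->
  \sum_(i < m.+1 | (i < k)%N) (f (val i).+1 - f (val i)) = f k - f 0%N.
Proof.
move=> hk; rewrite -(big_ord_widen _ (fun i => f i.+1 - f i) hk).
by rewrite -(big_mkord xpredT (fun i => f i.+1 - f i)) telescope_sumr.
Qed.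

Lemma lattice_charP (x : 'I_m.+1 -> int) :
  in_open_pp (@vertP m t) x <->
  (forall k, (k <= m)%N -> 0 < Lm x k.+1 - Lm x k < 1).
Proof.
have tR j : ((t j)%:R : rat) != 0 by rewrite pnatr_eq0 -lt0n ht.
split.
- case=> lam [hl hx].
  have LmE k : (k <= m.+1)%N -> Lm x k = \sum_(i < m.+1 | (i < k)%N) lam i.
    move=> hk; rewrite /Lm; case: eqP => [->|/eqP k0].
      by rewrite big_pred0 // => i.
    case: ifP => km.
      have kk : (k.-1 < m)%N by rewrite prednK // lt0n.
      have -> : (inord k.-1 : 'I_m.+1) = lift ord_max (Ordinal kk).
        by apply: val_inj; rewrite /= inordK ?(ltn_trans kk) // /bump leqNgt kk.
      rewrite hx; under eq_bigr => i _ do rewrite lift_pt_lift /vertP /=.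
      rewrite (bigID (fun i : 'I_m.+1 => (i < k)%N)) /= [X in _ + X]big1 => [|i /negbTE ik]; last first.
        by rewrite -ltnS prednK ?lt0n // ik mulr0.
      rewrite addr0 (eq_bigr (fun i => lam i * (t k.-1)%:R)) => [|i ik]; last first.
        by rewrite -ltnS prednK ?lt0n // ik.
      by rewrite -mulr_suml mulfK.
    have -> : k = m.+1 by apply/eqP; rewrite eqn_leq hk ltnNge km.
    rewrite hx; under eq_bigr => i _ do rewrite lift_pt_max mulr1.
    by apply: eq_bigl => i; rewrite ltn_ord.
  move=> k km; rewrite !LmE ?ltnS ?(leq_trans km) //.
  rewrite (bigD1 (inord k)) /= ?inordK ?ltnS //.
  have -> : \sum_(i < m.+1 | (i < k.+1)%N && (i != inord k)) lam i
          = \sum_(i < m.+1 | (i < k)%N) lam i.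
    apply: eq_bigl => i; rewrite ltnS leq_eqVlt.
    have -> : (i != inord k :> 'I_m.+1) = (val i != k).
      by rewrite -(inj_eq val_inj) /= inordK // ltnS.
    by case: (ltngtP (val i) k).
  by rewrite addrK hl.
- move=> H.
  exists (fun i : 'I_m.+1 => Lm x (val i).+1 - Lm x (val i)); split.
    by move=> i; exact: H (ltn_ord i).
  move=> j; case: (unliftP ord_max j) => [k ->|->].
  + under eq_bigr => i _ do rewrite lift_pt_lift /vertP.
    rewrite (bigID (fun i : 'I_m.+1 => (i < k.+1)%N)) /= [X in _ + X]big1 => [|i /negbTE ik]; last first.
      by rewrite -ltnS ik mulr0.
    rewrite addr0 (eq_bigr (fun i => (Lm x (val i).+1 - Lm x (val i)) * (t k)%:R)) => [|i ik]; last first.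
      by rewrite -ltnS ik.
    rewrite -mulr_suml tele_ord; last by rewrite ltnS ltnW.
    rewrite /Lm /= ltn_ord /=.
    have -> : (inord k : 'I_m.+1) = lift ord_max k by apply: val_inj; rewrite /= inordK ?(ltn_trans (ltn_ord k)) // /bump leqNgt ltn_ord.
    by rewrite subr0 divfK.
  + under eq_bigr => i _ do rewrite lift_pt_max mulr1.
    rewrite (eq_bigl (fun i : 'I_m.+1 => (i < m.+1)%N)) => [|i]; last by rewrite ltn_ord.
    rewrite tele_ord //.
    by rewrite /Lm /= ltnn subr0.
Qed.
End Char.

Lemma pp_boundP (d m : nat) (v : 'I_d.+1 -> 'I_m -> int) x :
  in_open_pp v x -> forall j, (absz (x j) <= pp_bound v)%N.
Proof.
case=> lam [hl hx] j.
have h1 : `|(x j)%:~R : rat| <= ((\sum_(i < d.+1) absz (lift_pt (v i) j))%N)%:R.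
  rewrite hx natr_sum; apply: (le_trans (ler_norm_sum _ _ _)); apply: ler_sum => i _.
  rewrite normrM natr_absz intr_norm -[X in _ <= X]mul1r ler_wpM2r //.
  by case/andP: (hl i) => h0 h1; rewrite ger0_norm ?ltW.
have h2 : (\sum_(i < d.+1) absz (lift_pt (v i) j) <= pp_bound v)%N.
  rewrite /pp_bound; apply: leq_sum => i _.
  by rewrite (bigD1 j) //= leq_addr.
apply: leq_trans h2; rewrite -(ler_nat rat); apply: le_trans h1.
by rewrite natr_absz intr_norm.
Qed.


Section Bij.
Variables (d m : nat) (v : 'I_d.+1 -> 'I_m -> int).
Local Notation B := (pp_bound v).
Definition xy (y : {ffun 'I_m.+1 -> 'I_(B.*2.+1)}) : 'I_m.+1 -> int :=
  fun j => (y j : nat)%:Z - B%:Z.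
Definition enc (x : 'I_m.+1 -> int) : {ffun 'I_m.+1 -> 'I_(B.*2.+1)} :=
  [ffun j => inord (absz (x j + B%:Z))].

Lemma xy_enc x : (forall j, absz (x j) <= B)%N -> xy (enc x) =1 x.
Proof.
move=> hb j; rewrite /xy ffunE inordK; last by have := hb j; lia.
by have := hb j; lia.
Qed.

Lemma enc_xy y : enc (xy y) = y.
Proof.
apply/ffunP => j; rewrite ffunE; apply: val_inj; rewrite /xy /= inordK; last first.
  by have := ltn_ord (y j); lia.
by lia.
Qed.

Lemma lstar_bij (J : finType) (Q : pred J) (X : J -> 'I_m.+1 -> int)
    (dec : ('I_m.+1 -> int) -> J) (hgt : J -> nat) :
  (forall j, Q j -> in_open_pp v (X j)) ->
  (forall j, Q j -> dec (X j) = j) ->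
  (forall x, in_open_pp v x -> Q (dec x) /\ X (dec x) =1 x) ->
  (forall j, Q j -> absz (X j ord_max) = hgt j) ->
  lstar v = \sum_(j | Q j) 'X^(hgt j).
Proof.
move=> hQ hdec hsur hh.
rewrite /lstar (eq_bigr (fun y => if `[< in_open_pp v (xy y) >] then 'X^(absz (xy y ord_max)) else 0)) //.
rewrite -big_mkcond (reindex_onto (fun j => enc (X j)) (fun y => dec (xy y))) /=; last first.
  move=> y /asboolP /hsur [_ h]; rewrite -[RHS]enc_xy; congr enc.
  by apply: funext => j; rewrite h.
apply: eq_big => j.
  apply/idP/idP.
    case/andP => /asboolP hP /eqP hd.
    by have [+ _] := hsur _ hP; rewrite hd.
  move=> Qj; have hx := xy_enc (pp_boundP (hQ _ Qj)).
  have -> : xy (enc (X j)) = X j by apply: funext.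
  by rewrite hdec // eqxx andbT; apply/asboolP; apply: hQ.
move=> /andP[/asboolP hP /eqP hd].
have Qj : Q j by have [+ _] := hsur _ hP; rewrite hd.
have hx := xy_enc (pp_boundP (hQ _ Qj)).
by rewrite hx hh.
Qed.
End Bij.

Local Close Scope ring_scope.

Section Leh.
Variable n0 : nat.
Local Notation n := n0.+1.

Definition Lo (p : {perm 'I_n}) (i : nat) : nat :=
  #|[set k : 'I_n | (i < k) && (p k < p (inord i))]|.

Lemma card_lt_ord a : a <= n -> #|[pred k : 'I_n | k < a]| = a.
Proof.
move=> ha; rewrite -sum1_card -(big_ord_widen _ (fun _ => 1) ha).
by rewrite sum1_card card_ord.
Qed.

Lemma card_gt_ord i : i < n -> #|[set k : 'I_n | i < k]| = n - i.+1.
Proof.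
move=> hi.
have h := cardC [pred k : 'I_n | k < i.+1].
rewrite card_ord card_lt_ord // in h.
rewrite -[in RHS]h addKn; apply: eq_card => k.
by rewrite !inE ltnNge.
Qed.

Lemma Lo_bound (p : {perm 'I_n}) i : i < n -> Lo p i < n - i.
Proof.
move=> hi; apply: (@leq_trans (n - i.+1).+1); last by lia.
rewrite ltnS -card_gt_ord //; apply: subset_leq_card; apply/subsetP => k.
by rewrite !inE => /andP[].
Qed.

Lemma Lo_step (p : {perm 'I_n}) i : i.+1 < n ->
  (p (inord i.+1) < p (inord i)) = (Lo p i.+1 < Lo p i).
Proof.
move=> hi.
have hi' : i < n by lia.
case: (ltngtP (p (inord i.+1)) (p (inord i))) => h.
- apply/esym; apply: proper_card; apply/properP; split.
    apply/subsetP => k; rewrite !inE => /andP[h1 h2].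
    by rewrite (ltn_trans _ h1) //= (ltn_trans h2).
  exists (inord i.+1); rewrite !inE inordK // ?ltnSn //= ?h //.
  by rewrite ltnn.
- apply/esym/negbTE; rewrite -leqNgt; apply: subset_leq_card; apply/subsetP => k.
  rewrite !inE => /andP[h1 h2]; rewrite (ltn_trans h2 h) andbT.
  rewrite ltn_neqAle h1 andbT; apply/eqP => ek.
  have : k = inord i.+1 by apply: val_inj; rewrite /= inordK.
  move=> ek'; rewrite ek' in h2; move: (ltn_trans h2 h); by rewrite ltnn.
- have := congr1 val (perm_inj (val_inj h)).
  by rewrite /= !inordK //; lia.
Qed.

Lemma Lo0 (p : {perm 'I_n}) i : i < n ->
  (Lo p i == 0) = [forall k : 'I_n, (i < k) ==> (p (inord i) < p k)].
Proof.
move=> hi; rewrite /Lo cards_eq0; apply/eqP/forallP.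
- move=> h k; apply/implyP => ik.
  have : k \notin [set k : 'I_n | (i < k) && (p k < p (inord i))] by rewrite h inE.
  rewrite inE ik /= -leqNgt leq_eqVlt => /orP[/eqP e|//].
  have := perm_inj (val_inj e) => ek.
  by move: ik; rewrite -ek inordK // ltnn.
- move=> h; apply/setP => k; rewrite !inE.
  apply/negbTE; apply/negP => /andP[ik pk].
  by have := implyP (h k) ik; rewrite ltnNge (ltnW pk).
Qed.

Lemma Lo_values (p : {perm 'I_n}) i : Lo p i = #|[set u : 'I_n | (i < (p^-1)%g u) && (u < p (inord i))]|.
Proof.
rewrite /Lo -[RHS](card_preimset _ (@perm_inj _ p)); apply: eq_card => k.
by rewrite !inE permK. Qed.

Lemma Lo_inj_aux (p p' : {perm 'I_n}) i : i < n ->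
  (forall k : 'I_n, k < i -> p k = p' k) ->
  p (inord i) < p' (inord i) -> Lo p i < Lo p' i.
Proof.
move=> hi IH hlt.
have cl u : (i <= (p^-1)%g u) = (i <= (p'^-1)%g u).
  case: (ltnP ((p^-1)%g u) i) => h1.
    have e : (p'^-1)%g u = (p^-1)%g u.
      by apply: (@perm_inj _ p'); rewrite permKV -IH // permKV.
    by rewrite e leqNgt h1.
  case: (ltnP ((p'^-1)%g u) i) => h2 //.
  have e : (p^-1)%g u = (p'^-1)%g u.
    by apply: (@perm_inj _ p); rewrite permKV IH // permKV.
  by move: h1; rewrite e leqNgt h2.
rewrite !Lo_values; apply: proper_card; apply/properP; split.
  apply/subsetP => u; rewrite !inE => /andP[h1 h2].
  rewrite (ltn_trans h2 hlt) andbT.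
  have : i <= (p'^-1)%g u by rewrite -cl ltnW.
  rewrite leq_eqVlt => /orP[/eqP e|//].
  have : u = p' (inord i).
    have -> : (inord i : 'I_n) = (p'^-1)%g u by apply: val_inj; rewrite /= inordK.
    by rewrite permKV.
  by move=> eu; move: (ltn_trans h2 hlt); rewrite eu ltnn.
exists (p (inord i)); rewrite !inE ?ltnn ?andbF // hlt andbT.
have e : (p^-1)%g (p (inord i)) = inord i by rewrite permK.
have : i <= (p'^-1)%g (p (inord i)) by rewrite -cl e inordK.
rewrite leq_eqVlt => /orP[/eqP ee|//].
have : (inord i : 'I_n) = (p'^-1)%g (p (inord i)) by apply: val_inj; rewrite /= inordK.
move/(congr1 p'); rewrite permKV => hh.
by move: hlt; rewrite -hh ltnn.
Qed.

Lemma Lo_inj (p p' : {perm 'I_n}) :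
  (forall i, i < n -> Lo p i = Lo p' i) -> p = p'.
Proof.
move=> hL.
suff H : forall i (k : 'I_n), k < i -> p k = p' k.
  by apply/permP => k; apply: (H k.+1).
elim=> [|i IH] k //; rewrite ltnS leq_eqVlt => /orP[/eqP ek|]; last exact: IH.
have hi : i < n by rewrite -ek.
have kk : k = inord i by apply: val_inj; rewrite /= inordK.
rewrite kk.
case: (ltngtP (p (inord i)) (p' (inord i))) => h.
- have := Lo_inj_aux hi IH h; by rewrite hL // ltnn.
- have IH' : forall k0 : 'I_n, k0 < i -> p' k0 = p k0 by move=> k0 /IH ->.
  have := Lo_inj_aux hi IH' h; by rewrite hL // ltnn.
- exact: val_inj.
Qed.

Definition code (p : {perm 'I_n}) : {ffun 'I_n -> 'I_n} := [ffun i : 'I_n => inord (Lo p i)].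

Lemma code_inj : injective code.
Proof.
move=> p p' /ffunP h; apply: Lo_inj => i hi.
have := congr1 val (h (Ordinal hi)); rewrite !ffunE /= !inordK //.
  by have := Lo_bound p' hi; lia.
by have := Lo_bound p hi; lia.
Qed.

Definition codeF (i : 'I_n) : pred 'I_n := [pred k : 'I_n | k < n - i].

Lemma card_codes : #|(family codeF : simpl_pred _)| = n`!.
Proof.
rewrite card_family foldrE big_map big_enum /=.
rewrite (eq_bigr (fun i : 'I_n => n - i)); last first.
  by move=> i _; rewrite card_lt_ord // leq_subr.
rewrite (reindex_inj rev_ord_inj) /=.
rewrite (eq_bigr (fun i : 'I_n => i.+1)); last by move=> i _; rewrite subKn.
rewrite fact_prod big_add1 /= big_mkord.
by [].
Qed.

Lemma Lo_surj (f : nat -> nat) : (forall i, i < n -> f i < n - i) ->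
  exists p : {perm 'I_n}, forall i, i < n -> Lo p i = f i.
Proof.
move=> hf.
set S := [set code p | p in [set: {perm 'I_n}]].
have sub : S \subset [set g | g \in family codeF].
  apply/subsetP => g /imsetP [p _ ->]; rewrite inE; apply/familyP => i.
  rewrite /code ffunE inE /= inordK; first exact: Lo_bound. by have := Lo_bound p (ltn_ord i); lia.
have eqS : S = [set g | g \in family codeF].
  apply/eqP; rewrite eqEcard sub /= card_imset; last exact: code_inj.
  rewrite cardsT card_Sn.
  by rewrite (eq_card (B := family codeF)) ?card_codes // => g; rewrite inE.
have : [ffun i : 'I_n => inord (f i)] \in S.
  rewrite eqS inE; apply/familyP => i; rewrite ffunE inE /= inordK; first exact: hf.
  by have := hf _ (ltn_ord i); lia.
case/imsetP => p _ /ffunP e; exists p => i hi.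
have := congr1 val (e (Ordinal hi)); rewrite !ffunE /= !inordK //.
  by have := Lo_bound p hi; lia.
by have := hf _ hi; lia.
Qed.
End Leh.
Section Link.
Variables n0 r0 : nat.
Local Notation n := n0.+1.
Local Notation r := r0.+1.
Variables (p : {perm 'I_n}) (c : {ffun 'I_n -> 'I_r}).

Definition pN i : nat := p (inord i).
Definition cN i : nat := c (inord i).

Lemma piv_ok i : i < n -> piv p i.+1 = (pN i).+1.
Proof.
move=> hi; rewrite /piv /= (insubT (fun k => k < n) hi) /pN.
by congr (nat_of_ord (p _)).+1; apply: val_inj; rewrite /= inordK.
Qed.

Lemma colv_ok i : i < n -> colv c i.+1 = cN i.
Proof.
move=> hi; rewrite /colv /= (insubT (fun k => k < n) hi) /cN.
by congr (nat_of_ord (c _)); apply: val_inj; rewrite /= inordK.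
Qed.

Lemma piv_big i : n <= i -> piv p i.+1 = n.+1.
Proof. by move=> hi; rewrite /piv /= insubF // ltnNge hi. Qed.

Lemma colv_big i : n <= i -> colv c i.+1 = 0.
Proof. by move=> hi; rewrite /colv /= insubF // ltnNge hi. Qed.

Lemma pN_lt i : pN i < n.
Proof. exact: ltn_ord. Qed.

Definition dsc i : bool :=
  (cN i.+1 < cN i) || (cN i == cN i.+1) && (pN i.+1 < pN i).

Lemma desc_ok i : i.+1 < n -> is_descent p c i.+1 = dsc i.
Proof.
move=> hi; rewrite /is_descent /dsc !colv_ok ?piv_ok //; lia.
Qed.

Lemma desc_last : is_descent p c n = (0 < cN n0).
Proof.
rewrite /is_descent (colv_ok (i:=n0)) // (colv_big (i:=n)) // (piv_ok (i:=n0)) // (piv_big (i:=n)) //.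
have := pN_lt n0; case: (cN n0) => [|k] /=; rewrite ?orbT //; lia.
Qed.

Lemma des_ok : des p c = (0 < cN n0) + count dsc (iota 0 n0).
Proof.
rewrite /des (_ : iota 1 n = iota 1 n0 ++ [:: n]); last by rewrite -(addn1 n0) iotaD addnC.
rewrite count_cat /= desc_last addn0 addnC; congr (_ + _).
rewrite (iotaDl 1 0) count_map; apply: eq_in_count => i; rewrite mem_iota /= => hi.
by rewrite desc_ok //; lia.
Qed.

Definition badN i : bool :=
  (Lo p i == 0) && (if i == 0 then cN 0 == 0 else (Lo p i.-1 == 0) && (cN i == cN i.-1)).

Lemma all_piv i : i < n ->
  all (fun k => piv p i.+1 < piv p k) (iota i.+2 (n - i)) = (Lo p i == 0).
Proof.
move=> hi; rewrite Lo0 //; apply/allP/forallP.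
- move=> h k; apply/implyP => ik.
  have hk : k.+1 \in iota i.+2 (n - i) by rewrite mem_iota; have := ltn_ord k; lia.
  have := h _ hk; rewrite !piv_ok // /pN ltnS.
  by have -> : (inord k : 'I_n) = k by apply: val_inj; rewrite /= inordK.
- move=> h k; rewrite mem_iota => /andP[k1 k2].
  rewrite piv_ok //.
  case: (ltnP k n.+1) => kn.
    have -> : k = (k.-1).+1 by lia.
    rewrite piv_ok; last by lia.
    rewrite ltnS /pN; have := implyP (h (inord k.-1)); rewrite inordK; last by lia.
    by apply; lia.
  have -> : k = n.+1 by lia.
  by rewrite piv_big // ltnS pN_lt.
Qed.

Lemma has_bad : has (is_bad p c) (iota 1 n) = has badN (iota 0 n).
Proof.
have cond j : j \in iota 1 n ->
   [&& all (fun k => piv p j < piv p k) (iota j.+1 (n.+1 - j)),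
       all (fun k => piv p j.-1 < piv p k) (iota j (n.+2 - j)) &
       colv c j == colv c j.-1] = badN j.-1.
  rewrite mem_iota => /andP[j1 j2].
  have -> : j = (j.-1).+1 by lia.
  set i := j.-1.
  have hi : i < n by rewrite /i; lia.
  rewrite /= (_ : n.+1 - i.+1 = n - i); last by lia.
  rewrite all_piv // colv_ok //.
  case: (i =P 0) => [i0|/eqP i0].
    have -> : all (fun k => piv p i < piv p k) (iota i.+1 (n0.+3 - i.+1)) = true.
      apply/allP => k; rewrite mem_iota => /andP[k1 k2]; rewrite i0 {1}/piv /=.
      have -> : k = (k.-1).+1 by lia.
      by case: (ltnP k.-1 n) => kn; [rewrite piv_ok | rewrite piv_big].
    by rewrite /badN i0 /colv /=.
  have -> : i = (i.-1).+1 by lia.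
  rewrite colv_ok; last by lia.
  rewrite (_ : n0.+3 - (i.-1).+2 = n - i.-1); last by lia.
  rewrite all_piv; last by lia.
  by rewrite /badN /=.
apply/hasP/hasP.
- case=> v _; rewrite /is_bad => /hasP [j jin /andP[_ hj]].
  exists j.-1; first by move: jin; rewrite !mem_iota; lia.
  by rewrite -cond.
- case=> i iin hb; exists (piv p i.+1).
    by rewrite piv_ok ?mem_iota; move: iin; rewrite mem_iota; have := pN_lt i; lia.
  apply/hasP; exists i.+1; first by move: iin; rewrite !mem_iota; lia.
  by rewrite eqxx /= cond //; move: iin; rewrite !mem_iota; lia.
Qed.

Lemma nobad_ok : no_bad p c = ~~ has badN (iota 0 n).
Proof. by rewrite /no_bad has_bad. Qed.
End Link.

Lemma cmp_w (C C' L L' K : nat) : 0 < K -> L <= K -> L' < K ->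
  ((C * K.+1 + L) * K == (C' * K + L') * K.+1) = [&& C == C', L == 0 & L' == 0] /\
  ((C' * K + L') * K.+1 < (C * K.+1 + L) * K) = (C' < C) || (C == C') && (L' < L).
Proof.
move=> K0 hL hL'.
case: (ltngtP C C') => hC.
- have : C.+1 <= C' by [].
  move=> hC1.
  have : (C * K.+1 + L) * K < (C' * K + L') * K.+1.
    have h1 : (C * K.+1 + L) * K <= C * K.+1 * K + K * K by nia.
    have h2 : C.+1 * K * K.+1 <= (C' * K + L') * K.+1 by nia.
    nia.
  move=> h; split; first by apply/negbTE; nia.
  by apply/negbTE; nia.
- have : C'.+1 <= C by [].
  move=> hC1.
  have : (C' * K + L') * K.+1 < (C * K.+1 + L) * K.
    have h1 : (C' * K + L') * K.+1 <= C' * K * K.+1 + K.-1 * K.+1 by nia.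
    have h2 : C'.+1 * K.+1 * K <= (C * K.+1 + L) * K by nia.
    nia.
  move=> h; split; last by rewrite h; lia.
  by apply/negbTE; nia.
- subst C'; rewrite /=.
  case: (ltngtP L' L) => hl.
  + have : (C * K + L') * K.+1 < (C * K.+1 + L) * K by nia.
    move=> h; split; last by rewrite h.
    have -> : (L == 0) = false by lia.
    by rewrite /=; apply/negbTE; nia.
  + have : (C * K.+1 + L) * K <= (C * K + L') * K.+1 by nia.
    move=> h.
    split; last by apply/negbTE; nia.
    case: (L' =P 0) => [l0|/eqP l0]; first by lia.
    by rewrite andbF; apply/negbTE; nia.
  + subst L'; split; last by apply/negbTE; nia.
    case: (L =P 0) => [->|/eqP l0]; first by apply/eqP; rewrite !addn0 mulnAC.
    by rewrite andbF; apply/negbTE; nia.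
Qed.

Local Open Scope ring_scope.
Lemma stepK' (dl : int) (u u' : rat) : 0 < u <= 1 -> 0 < u' <= 1 ->
  (0 < dl%:~R + (u - u') < 1) = (u != u') && (dl == if u < u' then 1 else 0).
Proof.
move=> /andP[u0 u1] /andP[u'0 u'1].
have c1 : (dl <= 0)%R \/ dl = 1 \/ (2 <= dl)%R by lia.
have c0 : (dl <= -1)%R \/ dl = 0 \/ (1 <= dl)%R by lia.
case: (ltgtP u u') => h /=.
- case: c1 => [d0|[->|d2]].
  + have : (dl%:~R : rat) <= 0 by rewrite (ler_int rat dl 0).
    move=> d0'; have -> : (dl == 1) = false by lia.
    by apply/negbTE; rewrite negb_and -!real_leNgt ?num_real //; apply/orP; left; lra.
  + by rewrite eqxx; apply/andP; split; lra.
  + have : (2 : rat) <= dl%:~R by rewrite (ler_int rat 2 dl).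
    move=> d0'; have -> : (dl == 1) = false by lia.
    by apply/negbTE; rewrite negb_and -!real_leNgt ?num_real //; apply/orP; right; lra.
- case: c0 => [d0|[->|d2]].
  + have : (dl%:~R : rat) <= -1 by rewrite (ler_int rat dl (-1)).
    move=> d0'; have -> : (dl == 0) = false by lia.
    by apply/negbTE; rewrite negb_and -!real_leNgt ?num_real //; apply/orP; left; lra.
  + by rewrite eqxx; apply/andP; split; lra.
  + have : (1 : rat) <= dl%:~R by rewrite (ler_int rat 1 dl).
    move=> d0'; have -> : (dl == 0) = false by lia.
    by apply/negbTE; rewrite negb_and -!real_leNgt ?num_real //; apply/orP; right; lra.
- rewrite h subrr addr0.
  case: c0 => [d0|[->|d2]].
  + have : (dl%:~R : rat) <= -1 by rewrite (ler_int rat dl (-1)).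
    by move=> d0'; apply/negbTE; rewrite negb_and -!real_leNgt ?num_real //; apply/orP; left; lra.
  + by rewrite ltxx.
  + have : (1 : rat) <= dl%:~R by rewrite (ler_int rat 1 dl).
    by move=> d0'; apply/negbTE; rewrite negb_and -!real_leNgt ?num_real //; apply/orP; right; lra.
Qed.

Lemma stepK (t t' a a' E E' : int) : 0 < t -> 0 < t' -> 0 < E <= t -> 0 < E' <= t' ->
  ((0 : rat) < ((a%:~R : rat) + (E%:~R : rat) / (t%:~R : rat)) - ((a'%:~R : rat) + (E'%:~R : rat) / (t'%:~R : rat)) < 1) =
  (E * t' != E' * t) && (a - a' == if E * t' < E' * t then 1 else 0).
Proof.
move=> t0 t'0 /andP[E0 Et] /andP[E'0 E't].
have tR : (0 : rat) < t%:~R by rewrite ltr0z.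
have t'R : (0 : rat) < t'%:~R by rewrite ltr0z.
have hu : (0 : rat) < (E%:~R : rat) / (t%:~R : rat) <= 1.
  by rewrite divr_gt0 ?ltr0z //= ler_pdivrMr // mul1r ler_int.
have hu' : (0 : rat) < (E'%:~R : rat) / (t'%:~R : rat) <= 1.
  by rewrite divr_gt0 ?ltr0z //= ler_pdivrMr // mul1r ler_int.
have -> : ((a%:~R : rat) + (E%:~R : rat) / (t%:~R : rat)) - ((a'%:~R : rat) + (E'%:~R : rat) / (t'%:~R : rat)) =
   ((a - a')%:~R : rat) + ((E%:~R : rat) / (t%:~R : rat) - (E'%:~R : rat) / (t'%:~R : rat)) by rewrite intrD intrN; ring.
rewrite stepK' //.
have -> : ((E%:~R : rat) / (t%:~R : rat) == (E'%:~R : rat) / (t'%:~R : rat)) = (E * t' == E' * t).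
  by rewrite eqr_div ?lt0r_neq0 // -!intrM eqr_int.
have -> : ((E%:~R : rat) / (t%:~R : rat) < (E'%:~R : rat) / (t'%:~R : rat)) = (E * t' < E' * t).
  by rewrite ltr_pdivrMr // mulrAC ltr_pdivlMr // -!intrM ltr_int.
by [].
Qed.

Local Close Scope ring_scope.

Section Chain.
Variables n0 r0 : nat.
Local Notation n := n0.+1.
Local Notation r := r0.+1.
Local Open Scope ring_scope.

Definition tt i : nat := ((n - i) * r)%N.
Definition ww (p : {perm 'I_n}) (c : {ffun 'I_n -> 'I_r}) i : nat := (cN c i * (n - i) + Lo p i)%N.
Definition Ee (p : {perm 'I_n}) (c : {ffun 'I_n -> 'I_r}) i : int := (tt i)%:Z - (ww p c i)%:Z.
Definition Aa (p : {perm 'I_n}) (c : {ffun 'I_n -> 'I_r}) i : int :=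
  (if (0 < cN c n0)%N then 1 else 0) - 1 + (count (dsc p c) (iota i (n0 - i)))%:Z.
Definition Xv (p : {perm 'I_n}) (c : {ffun 'I_n -> 'I_r}) i : int := (tt i)%:Z * Aa p c i + Ee p c i.
Definition LamQ (h : int) (xv : nat -> int) (q : nat) : rat :=
  if q == 0%N then h%:~R else if (q <= n)%N then (xv q.-1)%:~R / ((tt q.-1)%:Z)%:~R else 0.

Lemma cN_lt (c : {ffun 'I_n -> 'I_r}) i : (cN c i < r)%N.
Proof. exact: ltn_ord. Qed.

Lemma ww_lt (p : {perm 'I_n}) (c : {ffun 'I_n -> 'I_r}) i : (i < n)%N -> (ww p c i < tt i)%N.
Proof.
move=> hi; rewrite /ww /tt; have := cN_lt c i; have := Lo_bound p hi.
move: (cN c i) (Lo p i) => C L hL hC.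
have : (C * (n - i) + L < C * (n - i) + (n - i))%N by lia.
move=> h; apply: (leq_trans h); by rewrite -mulSnr [X in (_ <= X)%N]mulnC leq_mul2r hC orbT.
Qed.

Lemma Ee_bounds (p : {perm 'I_n}) (c : {ffun 'I_n -> 'I_r}) i : (i < n)%N -> 0 < Ee p c i <= (tt i)%:Z.
Proof. move=> hi; have := ww_lt p c hi; rewrite /Ee; lia. Qed.

Lemma tt_gt0 i : (i < n)%N -> (0 < tt i)%N.
Proof. by move=> hi; rewrite /tt muln_gt0 andbT; lia. Qed.

Lemma Lo_last (p : {perm 'I_n}) : Lo p n0 = 0%N.
Proof. have := Lo_bound p (ltnSn n0); lia. Qed.

Lemma ww_last (p : {perm 'I_n}) (c : {ffun 'I_n -> 'I_r}) : ww p c n0 = cN c n0.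
Proof. by rewrite /ww Lo_last subSnn muln1 addn0. Qed.

Lemma Aa_rec (p : {perm 'I_n}) (c : {ffun 'I_n -> 'I_r}) i : (i < n0)%N ->
  Aa p c i = Aa p c i.+1 + (if dsc p c i then 1 else 0).
Proof.
move=> hi; rewrite /Aa (_ : n0 - i = (n0 - i.+1).+1)%N; last by lia.
rewrite /= -addn1 PoszD; case: (dsc p c i) => /=; lia.
Qed.

Lemma Aa_last (p : {perm 'I_n}) (c : {ffun 'I_n -> 'I_r}) : Aa p c n0 = (if (0 < cN c n0)%N then 1 else 0) - 1.
Proof. by rewrite /Aa subnn /= addr0. Qed.

Lemma des_Aa (p : {perm 'I_n}) (c : {ffun 'I_n -> 'I_r}) : (des p c)%:Z = Aa p c 0 + 1.
Proof.
rewrite des_ok /Aa subn0 PoszD; case: (0 < cN c n0)%N => /=; lia.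
Qed.

Lemma Lam_form (a E t : int) : t != 0 ->
  ((t * a + E)%:~R / t%:~R : rat) = a%:~R + E%:~R / t%:~R.
Proof.
move=> t0; have t0' : (t%:~R : rat) != 0 by rewrite intr_eq0.
by rewrite intrD intrM mulrDl mulrAC mulfV // mul1r.
Qed.

Lemma cmpE (p : {perm 'I_n}) (c : {ffun 'I_n -> 'I_r}) i : (i.+1 < n)%N ->
  (Ee p c i * (tt i.+1)%:Z == Ee p c i.+1 * (tt i)%:Z) = badN p c i.+1 /\
  (Ee p c i * (tt i.+1)%:Z < Ee p c i.+1 * (tt i)%:Z) = dsc p c i.
Proof.
move=> hi.
set K := (n - i.+1)%N.
have K0 : (0 < K)%N by rewrite /K; lia.
have hK : (n - i = K.+1)%N by rewrite /K; lia.
have hL : (Lo p i <= K)%N by have := Lo_bound p (ltnW hi); lia.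
have hL' : (Lo p i.+1 < K)%N by exact: Lo_bound.
have [e1 e2] := cmp_w (cN c i) (cN c i.+1) K0 hL hL'.
have key : Ee p c i * (tt i.+1)%:Z - Ee p c i.+1 * (tt i)%:Z =
    r%:Z * ((ww p c i.+1 * K.+1)%N%:Z - (ww p c i * K)%N%:Z).
  rewrite /Ee /tt hK -/K !PoszM; ring.
have ew : ww p c i = (cN c i * K.+1 + Lo p i)%N by rewrite /ww hK.
have ew' : ww p c i.+1 = (cN c i.+1 * K + Lo p i.+1)%N by rewrite /ww.
split.
- rewrite -subr_eq0 key mulf_eq0 /= subr_eq0 eqz_nat ew ew' eq_sym e1.
  rewrite /badN /= [cN c i.+1 == _]eq_sym.
  by case: (cN c i == cN c i.+1); case: (Lo p i == 0%N); case: (Lo p i.+1 == 0%N).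
- have -> : (Ee p c i * (tt i.+1)%:Z < Ee p c i.+1 * (tt i)%:Z) =
     (Ee p c i * (tt i.+1)%:Z - Ee p c i.+1 * (tt i)%:Z < 0) by rewrite subr_lt0.
  rewrite key pmulr_rlt0 // subr_lt0 ltz_nat ew ew' e2.
  by rewrite /dsc /pN Lo_step //; lia.
Qed.
End Chain.

Section Chain2.
Variables n0 r0 : nat.
Local Notation n := n0.+1.
Local Notation r := r0.+1.
Local Open Scope ring_scope.
Implicit Types (p : {perm 'I_n}) (c : {ffun 'I_n -> 'I_r}).

Lemma tt_neq0 i : (i < n)%N -> ((tt n0 r0 i)%:Z != 0).
Proof. by move=> hi; have := tt_gt0 r0 hi; lia. Qed.

Lemma LamQ_Xv h p c i : (i < n)%N ->
  LamQ n0 r0 h (Xv p c) i.+1 = (Aa p c i)%:~R + (Ee p c i)%:~R / ((tt n0 r0 i)%:Z)%:~R.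
Proof. by move=> hi; rewrite /LamQ /= hi /Xv Lam_form // tt_neq0. Qed.

Lemma LamQ_top h xv : LamQ n0 r0 h xv 0 = (h - 1)%:~R + (1:int)%:~R / (1:int)%:~R.
Proof. by rewrite /LamQ /= divr1 intrD; ring. Qed.

Lemma LamQ_bot h xv : LamQ n0 r0 h xv n.+1 = (-1 : int)%:~R + (1:int)%:~R / (1:int)%:~R.
Proof. by rewrite /LamQ /= ltnn divr1; ring. Qed.

Lemma step_perm p c q : (q <= n)%N ->
  ((0 : rat) < LamQ n0 r0 (des p c)%:Z (Xv p c) q - LamQ n0 r0 (des p c)%:Z (Xv p c) q.+1 < 1) =
  (if q == n then (0 < cN c n0)%N else ~~ badN p c q).
Proof.
move=> hq.
have [Eb0 Eb1] : 0 < Ee p c 0 /\ Ee p c 0 <= (tt n0 r0 0)%:Z.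
  by apply/andP; apply: Ee_bounds.
case: (posnP q) => [->|q0].
  rewrite LamQ_top LamQ_Xv // des_Aa addrK stepK //; last by rewrite Eb0 Eb1.
  rewrite mul1r mulr1 subrr.
  have -> : ((tt n0 r0 0)%:Z < Ee p c 0) = false by lia.
  rewrite eqxx andbT /= /badN /Ee /= /ww subn0.
  have h1 : (tt n0 r0 0)%:Z != (tt n0 r0 0)%:Z - (cN c 0 * n + Lo p 0)%N%:Z =
     (cN c 0 * n + Lo p 0 != 0)%N by apply/idP/idP; lia.
  rewrite h1 negb_and; move: (cN c 0) (Lo p 0) => C L.
  case: C => [|C]; case: L => [|L] //=; lia.
case: (ltngtP q n) => qn.
- have -> : q = (q.-1).+1 by lia.
  set i := q.-1.
  have hi : (i.+1 < n)%N by rewrite /i; lia.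
  rewrite LamQ_Xv ?(ltnW hi) // LamQ_Xv // stepK; last first.
  + by apply: Ee_bounds.
  + by apply: Ee_bounds; apply: ltnW.
  + by apply: tt_gt0.
  + by apply: tt_gt0; apply: ltnW.
  have [e1 e2] := @cmpE n0 r0 p c i hi.
  rewrite e1 e2 Aa_rec; last by lia.
  by rewrite addrAC subrr add0r eqxx andbT.
- by move: hq; rewrite leqNgt qn.
- subst q; rewrite LamQ_Xv // LamQ_bot stepK //; last first.
  + by apply: Ee_bounds.
  + by apply: tt_gt0.
  rewrite mulr1 mul1r Aa_last /Ee ww_last.
  have := cN_lt c n0; case: (cN c n0) => [|C] hC /=.
    by rewrite subr0 eqxx.
  have -> : ((tt n0 r0 n0)%:Z - (C.+1)%:Z != (tt n0 r0 n0)%:Z) = true by lia.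
  have -> : ((tt n0 r0 n0)%:Z - (C.+1)%:Z < (tt n0 r0 n0)%:Z) = true by lia.
  by rewrite /=; apply/eqP; ring.
Qed.
End Chain2.

Section Dec.
Variables n0 r0 : nat.
Local Notation n := n0.+1.
Local Notation r := r0.+1.
Local Open Scope ring_scope.
Local Notation tt := (tt n0 r0).

Definition wD (xv : nat -> int) i : nat := absz ((- xv i) %% (tt i)%:Z)%Z.
Definition cD (xv : nat -> int) : {ffun 'I_n -> 'I_r} :=
  [ffun i : 'I_n => inord (wD xv i %/ (n - i))].
Definition LD (xv : nat -> int) i : nat := (wD xv i %% (n - i))%N.
Definition pD (xv : nat -> int) : {perm 'I_n} :=
  odflt 1%g [pick p : {perm 'I_n} | [forall i : 'I_n, Lo p i == LD xv i]].
Definition aD (xv : nat -> int) i : int := - ((- xv i) %/ (tt i)%:Z)%Z - 1.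

Lemma wD_lt xv i : (i < n)%N -> (wD xv i < tt i)%N.
Proof.
move=> hi; have t0 := tt_gt0 r0 hi; rewrite /wD.
have h1 : (0 <= ((- xv i) %% (tt i)%:Z)%Z) by apply: modz_ge0; lia.
have h2 : (((- xv i) %% (tt i)%:Z)%Z < (tt i)%:Z) by apply: ltz_pmod; lia.
lia.
Qed.

Lemma xv_repr xv i : (i < n)%N ->
  xv i = (tt i)%:Z * aD xv i + ((tt i)%:Z - (wD xv i)%:Z).
Proof.
move=> hi; have t0 := tt_gt0 r0 hi.
have h1 : (0 <= ((- xv i) %% (tt i)%:Z)%Z) by apply: modz_ge0; lia.
have e := divz_eq (- xv i) (tt i)%:Z.
rewrite /aD /wD abszE ger0_norm //.
rewrite -{1}(opprK (xv i)) {1}e; ring.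
Qed.

Lemma cD_val xv i : (i < n)%N -> cN (cD xv) i = (wD xv i %/ (n - i))%N.
Proof.
move=> hi; rewrite /cN ffunE inordK ?inordK //.
rewrite ltn_divLR; last by lia.
by have := wD_lt xv hi; rewrite /tt mulnC.
Qed.

Lemma pD_val xv i : (i < n)%N -> Lo (pD xv) i = LD xv i.
Proof.
move=> hi.
have [p0 hp0] : exists p : {perm 'I_n}, forall i, (i < n)%N -> Lo p i = LD xv i.
  by apply: Lo_surj => k hk; rewrite /LD ltn_mod; lia.
rewrite /pD; case: pickP => [p' /forallP h | none] /=.
  by have := h (Ordinal hi); move/eqP.
have := none p0; case/forallP => k; by rewrite hp0.
Qed.

Lemma wwD xv i : (i < n)%N -> ww (pD xv) (cD xv) i = wD xv i.
Proof.
by move=> hi; rewrite /ww cD_val // pD_val // /LD -divn_eq.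
Qed.

Lemma EeD xv i : (i < n)%N -> Ee (pD xv) (cD xv) i = (tt i)%:Z - (wD xv i)%:Z.
Proof. by move=> hi; rewrite /Ee wwD. Qed.

Lemma decode_ok (h : int) (xv : nat -> int) :
  (forall q, (q < n)%N -> (0:rat) < LamQ n0 r0 h xv q - LamQ n0 r0 h xv q.+1 < 1) ->
  ((0:rat) < LamQ n0 r0 h xv n - LamQ n0 r0 h xv n.+1 < 1) \/ xv n0 = 0 ->
  (forall i, (i < n)%N -> Xv (pD xv) (cD xv) i = xv i) /\ h = (des (pD xv) (cD xv))%:Z.
Proof.
move=> hs hb.
set p := pD xv; set c := cD xv.
have LQ i : (i < n)%N -> LamQ n0 r0 h xv i.+1 =
    (aD xv i)%:~R + (Ee p c i)%:~R / ((tt i)%:Z)%:~R.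
  move=> hi; rewrite /LamQ /= hi {1}(xv_repr xv hi) Lam_form ?tt_neq0 //.
  by rewrite /p /c EeD.
have base : aD xv n0 = Aa p c n0.
  rewrite Aa_last /c cD_val // subSnn divn1.
  case: hb => [hs'|x0].
  - move: hs'; rewrite LQ // LamQ_bot stepK //; last first.
    + by apply: Ee_bounds.
    + by apply: tt_gt0.
    rewrite mulr1 mul1r /p /c EeD //.
    case/andP => hne /eqP ha.
    have w0 : (0 < wD xv n0)%N by move: hne; lia.
    rewrite w0; move: ha; have -> : ((tt n0)%:Z - (wD xv n0)%:Z < (tt n0)%:Z) = true by lia.
    by move=> ha; rewrite /=; lia.
  - rewrite /aD /wD x0 oppr0 mod0z div0z /=; lia.
have rec k : (k <= n0)%N -> aD xv (n0 - k) = Aa p c (n0 - k).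
  elim: k => [_|k IH hk]; first by rewrite subn0.
  have e : (n0 - k = (n0 - k.+1).+1)%N by lia.
  set i := (n0 - k.+1)%N.
  have hi : (i.+1 < n)%N by rewrite /i; lia.
  have := hs i.+1 hi; rewrite LQ ?(ltnW hi) // LQ // stepK; last first.
  + by apply: Ee_bounds.
  + by apply: Ee_bounds; apply: ltnW.
  + by apply: tt_gt0.
  + by apply: tt_gt0; apply: ltnW.
  have [_ e2] := @cmpE n0 r0 p c i hi.
  rewrite e2 => /andP[_ /eqP ha].
  have IH' := IH (ltnW hk); rewrite e in IH'.
  rewrite Aa_rec; last by rewrite /i; lia.
  by rewrite -IH' -/i; move: ha; case: (dsc p c i) => ha; lia.
have aA i : (i < n)%N -> aD xv i = Aa p c i.
  move=> hi; have := rec (n0 - i)%N (leq_subr _ _).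
  by rewrite subKn // -ltnS.
split.
  move=> i hi; rewrite /Xv -aA // (xv_repr xv hi) /p /c EeD //.
have := hs 0%N (ltn0Sn _); rewrite LamQ_top LQ // stepK //; last by apply: Ee_bounds.
rewrite mul1r mulr1.
have [Eb0 Eb1] : 0 < Ee p c 0 /\ Ee p c 0 <= (tt 0)%:Z by apply/andP; apply: Ee_bounds.
have -> : ((tt 0)%:Z < Ee p c 0) = false by lia.
case/andP => _ /eqP ha.
rewrite des_Aa -aA //; lia.
Qed.
End Dec.

Section Final0.
Variables n0 r0 : nat.
Local Notation n := n0.+1.
Local Notation r := r0.+1.
Local Open Scope ring_scope.
Local Notation tt := (tt n0 r0).
Local Notation LamQ := (LamQ n0 r0).
Implicit Types (p : {perm 'I_n}) (c : {ffun 'I_n -> 'I_r}).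

Lemma LamQ_ext h (xv xv' : nat -> int) q : (forall i, (i < n)%N -> xv i = xv' i) ->
  LamQ h xv q = LamQ h xv' q.
Proof.
move=> e; rewrite /LamQ; case: eqP => // q0; case: ifP => // qn.
by rewrite e //; lia.
Qed.

Lemma dec_ext (xv xv' : nat -> int) : (forall i, (i < n)%N -> xv i = xv' i) ->
  pD n0 r0 xv = pD n0 r0 xv' /\ cD n0 r0 xv = cD n0 r0 xv'.
Proof.
move=> e.
have ew i : (i < n)%N -> wD n0 r0 xv i = wD n0 r0 xv' i by move=> hi; rewrite /wD e.
split.
  rewrite /pD; congr odflt; apply: eq_pick => p; apply: eq_forallb => i.
  by rewrite /LD ew.
by apply/ffunP => i; rewrite !ffunE ew.
Qed.

Lemma wD_Xv p c i : (i < n)%N -> wD n0 r0 (Xv p c) i = ww p c i.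
Proof.
move=> hi; rewrite /wD /Xv /Ee.
have -> : - ((tt i)%:Z * Aa p c i + ((tt i)%:Z - (ww p c i)%:Z)) =
   (- Aa p c i - 1) * (tt i)%:Z + (ww p c i)%:Z by ring.
rewrite modzMDl modz_small //; apply/andP; split => //.
by have := ww_lt p c hi; lia.
Qed.

Lemma dec_enc p c : pD n0 r0 (Xv p c) = p /\ cD n0 r0 (Xv p c) = c.
Proof.
split.
  apply: Lo_inj => i hi; rewrite pD_val // /LD wD_Xv // /ww.
  by rewrite modnMDl modn_small //; apply: Lo_bound.
apply/ffunP => i; rewrite ffunE wD_Xv // /ww divnMDl; last by have := ltn_ord i; lia.
rewrite divn_small ?addn0; last by apply: Lo_bound.
by apply: val_inj; rewrite /= inordK /cN ?inord_val // ltn_ord.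
Qed.

End Final0.

Section Final.
Variables n0 r0 : nat.
Local Notation n := n0.+1.
Local Notation r := r0.+1.
Local Open Scope ring_scope.
Local Notation tt := (tt n0 r0).
Local Notation LamQ := (LamQ n0 r0).
Implicit Types (p : {perm 'I_n}) (c : {ffun 'I_n -> 'I_r}).

Definition tmu (j : nat) : nat := ((j + 1) * r)%N.
Definition X_mu (pc : {perm 'I_n} * {ffun 'I_n -> 'I_r}) : 'I_n.+1 -> int :=
  fun j => if (j : nat) == n then (des pc.1 pc.2)%:Z else Xv pc.1 pc.2 (n0 - j).
Definition xv_mu (x : 'I_n.+1 -> int) : nat -> int := fun i => x (inord (n0 - i)).
Definition dec_mu (x : 'I_n.+1 -> int) := (pD n0 r0 (xv_mu x), cD n0 r0 (xv_mu x)).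

Lemma Lm_mu x k : (k <= n.+1)%N -> Lm tmu x k = LamQ (x ord_max) (xv_mu x) (n.+1 - k).
Proof.
move=> hk; rewrite /Lm /LamQ.
case: (k =P 0%N) => [->|/eqP k0]; first by rewrite subn0 /= ltnn.
case: ifP => kn.
  have -> : (n.+1 - k == 0)%N = false by lia.
  have -> : (n.+1 - k <= n)%N = true by lia.
  rewrite /xv_mu /tmu /tt; congr (_ / _).
    by congr (x _)%:~R; apply: val_inj; rewrite /= !inordK; lia.
  by congr (_%:R); congr (_ * _)%N; lia.
have -> : k = n.+1 by lia.
by rewrite subnn.
Qed.

Lemma mu_open x : in_open_pp (@vertP n tmu) x <->
  (forall q, (q <= n)%N -> (0:rat) < LamQ (x ord_max) (xv_mu x) q - LamQ (x ord_max) (xv_mu x) q.+1 < 1).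
Proof.
rewrite lattice_charP; last by move=> j; rewrite /tmu muln_gt0 addn1.
split=> H q hq.
  have h1 := H (n - q)%N (leq_subr _ _).
  have k1 : ((n - q).+1 <= n.+1)%N by rewrite ltnS leq_subr.
  have k2 : (n - q <= n.+1)%N by rewrite (leq_trans (leq_subr _ _)).
  have e1 : (n.+1 - (n - q).+1 = q)%N by rewrite subSS subKn.
  have e2 : (n.+1 - (n - q) = q.+1)%N by rewrite subSn ?leq_subr // subKn.
  by rewrite (Lm_mu x k1) (Lm_mu x k2) e1 e2 in h1.
have h1 := H (n - q)%N (leq_subr _ _).
have k1 : (q.+1 <= n.+1)%N by rewrite ltnS.
have k2 : (q <= n.+1)%N by rewrite (leq_trans hq).
have e1 : (n.+1 - q.+1 = n - q)%N by rewrite subSS.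
have e2 : (n.+1 - q = (n - q).+1)%N by rewrite subSn.
by rewrite (Lm_mu x k1) (Lm_mu x k2) e1 e2.
Qed.

Lemma xv_mu_X pc i : (i < n)%N -> xv_mu (X_mu pc) i = Xv pc.1 pc.2 i.
Proof.
move=> hi; rewrite /xv_mu /X_mu inordK; last by lia.
have -> : (n0 - i == n)%N = false by lia.
by congr Xv; lia.
Qed.

Lemma dpoly_mu :
  dpoly n tmu = \sum_(pc : {perm 'I_n} * {ffun 'I_n -> 'I_r} | no_bad pc.1 pc.2 && (0 < cN pc.2 n0)%N) 'X^(des pc.1 pc.2).
Proof.
rewrite /dpoly (@lstar_bij _ _ _ _ (fun pc : {perm 'I_n} * {ffun 'I_n -> 'I_r} => no_bad pc.1 pc.2 && (0 < cN pc.2 n0)%N) X_mu dec_mu (fun pc => des pc.1 pc.2)) //.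
- move=> [p c] /andP[nb cn] /=; apply/mu_open => q hq.
  rewrite (_ : X_mu (p, c) ord_max = (des p c)%:Z); last by rewrite /X_mu /= eqxx.
  rewrite !(@LamQ_ext n0 r0 _ _ _ _ (xv_mu_X (p, c))) step_perm //.
  case: eqP => // qn; move: nb; rewrite nobad_ok => /hasPn; apply.
  by rewrite mem_iota; lia.
- move=> [p c] _; rewrite /dec_mu.
  have [-> ->] := @dec_ext n0 r0 _ _ (xv_mu_X (p, c)).
  by have [-> ->] := @dec_enc n0 r0 p c.
- move=> x /mu_open H.
  have [hX hd] := decode_ok (fun q hq => H q (ltnW hq)) (or_introl (H n (leqnn n))).
  set p := pD n0 r0 (xv_mu x) in hX hd *; set c := cD n0 r0 (xv_mu x) in hX hd *.
  have eL q : LamQ (x ord_max) (xv_mu x) q = LamQ (des p c)%:Z (Xv p c) q.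
    by rewrite hd; apply: (@LamQ_ext n0 r0) => i hi; rewrite hX.
  split.
    rewrite /dec_mu -/p -/c /= nobad_ok; apply/andP; split.
      apply/hasPn => q; rewrite mem_iota => /andP[_ hq].
      have := H q (ltnW hq); rewrite !eL step_perm ?(ltnW hq) //.
      by have -> : (q == n) = false by lia.
    by have := H n (leqnn n); rewrite !eL step_perm // eqxx.
  move=> j; rewrite /X_mu /dec_mu -/p -/c /=.
  case: eqP => [jn|/eqP jn].
    by rewrite -hd; congr x; apply: val_inj; rewrite /= jn.
  rewrite hX; last by lia.
  by rewrite /xv_mu; congr x; apply: val_inj; rewrite /= inordK; have := ltn_ord j; lia.
- by move=> [p c] _; rewrite /X_mu /= eqxx.
Qed.
End Final.

Section FinalS.
Variables n0 r0 : nat.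
Local Notation n := n0.+1.
Local Notation r := r0.+1.
Local Open Scope ring_scope.
Local Notation tt := (tt n0 r0).
Local Notation LamQ := (LamQ n0 r0).
Implicit Types (p : {perm 'I_n}) (c : {ffun 'I_n -> 'I_r}).

Definition ts (j : nat) : nat := ((j + 2) * r)%N.
Definition X_s (pc : {perm 'I_n} * {ffun 'I_n -> 'I_r}) : 'I_n0.+1 -> int :=
  fun j => if (j : nat) == n0 then (des pc.1 pc.2)%:Z else Xv pc.1 pc.2 (n0.-1 - j).
Definition xv_s (x : 'I_n0.+1 -> int) : nat -> int :=
  fun i => if (i < n0)%N then x (inord (n0.-1 - i)) else 0.
Definition dec_s (x : 'I_n0.+1 -> int) := (pD n0 r0 (xv_s x), cD n0 r0 (xv_s x)).

Lemma Lm_s x k : (k <= n)%N -> Lm ts x k = LamQ (x ord_max) (xv_s x) (n - k).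
Proof.
move=> hk; rewrite /Lm /LamQ.
case: (k =P 0%N) => [->|/eqP k0].
  by rewrite subn0 /= leqnn /xv_s ltnn mul0r.
case: ifP => kn.
  have -> : (n - k == 0)%N = false by lia.
  have -> : (n - k <= n)%N = true by lia.
  rewrite /xv_s /ts /tt.
  have -> : ((n - k).-1 < n0)%N = true by lia.
  congr (_ / _).
    by congr (x _)%:~R; apply: val_inj; rewrite /= !inordK; lia.
  by congr (_%:R); congr (_ * _)%N; lia.
have -> : k = n by lia.
by rewrite subnn.
Qed.

Lemma s_open x : in_open_pp (@vertP n0 ts) x <->
  (forall q, (q < n)%N -> (0:rat) < LamQ (x ord_max) (xv_s x) q - LamQ (x ord_max) (xv_s x) q.+1 < 1).
Proof.
rewrite lattice_charP; last by move=> j; rewrite /ts muln_gt0 addn2.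
split=> H q hq.
  have hq' : (n0 - q <= n0)%N by rewrite leq_subr.
  have h1 := H (n0 - q)%N hq'.
  have k1 : ((n0 - q).+1 <= n)%N by rewrite ltnS.
  have k2 : (n0 - q <= n)%N by rewrite (leq_trans hq').
  have e1 : (n - (n0 - q).+1 = q)%N by rewrite subSS subKn // -ltnS.
  have e2 : (n - (n0 - q) = q.+1)%N by rewrite subSn // subKn // -ltnS.
  by rewrite (Lm_s x k1) (Lm_s x k2) e1 e2 in h1.
have hq' : (n0 - q < n)%N by rewrite ltnS leq_subr.
have h1 := H (n0 - q)%N hq'.
have k1 : (q.+1 <= n)%N by rewrite ltnS.
have k2 : (q <= n)%N by rewrite (leq_trans hq).
have e1 : (n - q.+1 = n0 - q)%N by rewrite subSS.
have e2 : (n - q = (n0 - q).+1)%N by rewrite subSn.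
by rewrite (Lm_s x k1) (Lm_s x k2) e1 e2.
Qed.

Lemma Xv_last0 p c : cN c n0 = 0%N -> Xv p c n0 = 0.
Proof.
move=> h; rewrite /Xv Aa_last /Ee ww_last h /=; ring.
Qed.

Lemma xv_s_X pc i : (i < n)%N -> cN pc.2 n0 = 0%N -> xv_s (X_s pc) i = Xv pc.1 pc.2 i.
Proof.
move=> hi h0; rewrite /xv_s /X_s.
case: ifP => hin.
  rewrite inordK; last by lia.
  have -> : (n0.-1 - i == n0)%N = false by lia.
  by congr Xv; lia.
have -> : i = n0 by lia.
by rewrite Xv_last0.
Qed.

Lemma dpoly_s :
  dpoly n0 ts = \sum_(pc : {perm 'I_n} * {ffun 'I_n -> 'I_r} | no_bad pc.1 pc.2 && (cN pc.2 n0 == 0%N)) 'X^(des pc.1 pc.2).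
Proof.
rewrite /dpoly (@lstar_bij _ _ _ _ (fun pc : {perm 'I_n} * {ffun 'I_n -> 'I_r} => no_bad pc.1 pc.2 && (cN pc.2 n0 == 0%N)) X_s dec_s (fun pc => des pc.1 pc.2)) //.
- move=> [p c] /andP[nb /eqP cn] /=; apply/s_open => q hq.
  rewrite (_ : X_s (p, c) ord_max = (des p c)%:Z); last by rewrite /X_s /= eqxx.
  rewrite !(@LamQ_ext n0 r0 _ _ _ _ (fun i hi => xv_s_X (pc:=(p, c)) hi cn)) step_perm ?(ltnW hq) //.
  have -> : (q == n) = false by lia.
  move: nb; rewrite nobad_ok => /hasPn; apply.
  by rewrite mem_iota; lia.
- move=> [p c] /andP[_ /eqP cn]; rewrite /dec_s.
  have [-> ->] := @dec_ext n0 r0 _ _ (fun i hi => xv_s_X (pc:=(p, c)) hi cn).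
  by have [-> ->] := @dec_enc n0 r0 p c.
- move=> x /s_open H.
  have x0 : xv_s x n0 = 0 by rewrite /xv_s ltnn.
  have [hX hd] := decode_ok H (or_intror x0).
  set p := pD n0 r0 (xv_s x) in hX hd *; set c := cD n0 r0 (xv_s x) in hX hd *.
  have eL q : LamQ (x ord_max) (xv_s x) q = LamQ (des p c)%:Z (Xv p c) q.
    by rewrite hd; apply: (@LamQ_ext n0 r0) => i hi; rewrite hX.
  split.
    rewrite /dec_s -/p -/c /= nobad_ok; apply/andP; split.
      apply/hasPn => q; rewrite mem_iota => /andP[_ hq].
      have := H q hq; rewrite !eL step_perm ?(ltnW hq) //.
      by have -> : (q == n) = false by lia.
    by rewrite /c cD_val // subSnn divn1 /wD x0 oppr0 mod0z.
  move=> j; rewrite /X_s /dec_s -/p -/c /=.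
  case: eqP => [jn|/eqP jn].
    by rewrite -hd; congr x; apply: val_inj; rewrite /= jn.
  rewrite hX; last by lia.
  rewrite /xv_s; have := ltn_ord j => hj.
  have -> : (n0.-1 - j < n0)%N = true by lia.
  by congr x; apply: val_inj; rewrite /= inordK; lia.
- by move=> [p c] _; rewrite /X_s /= eqxx.
Qed.
End FinalS.

Local Open Scope ring_scope.

Theorem lemma4p11 (n r : nat) (hn : (0 < n)%N) (hr : (0 < r)%N) :
  dpoly (n.-1) (fun j => ((j + 2) * r)%N) + dpoly n (fun j => ((j + 1) * r)%N)
  = \sum_(p : {perm 'I_n}) \sum_(c : {ffun 'I_n -> 'I_r} | no_bad p c)
        'X^(des p c).
Proof.
case: n hn => // n0 _; case: r hr => // r0 _.
have e1 := dpoly_s n0 r0; have e2 := dpoly_mu n0 r0.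
rewrite /ts in e1; rewrite /tmu in e2; rewrite /= e1 e2.
rewrite pair_big_dep /= [RHS](bigID (fun pc : {perm 'I_n0.+1} * {ffun 'I_n0.+1 -> 'I_r0.+1} => cN pc.2 n0 == 0%N)) /=.
congr (_ + _); apply: eq_bigl => pc //.
by rewrite lt0n.
Qed.
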